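(* Let $\mathcal{X}\subset\mathbb{R}^n$ be a convex connected domain containing $0$, let $K:\mathcal{X}\to\mathbb{R}$ be smooth with $\nabla^2K(x)>0$ for all $x$, let $\mathcal{U}=\mathbb{R}^m$, and let $V:\mathcal{X}\times\mathcal{U}\to\mathbb{R}$ be smooth with $$x^\top\frac{\partial V}{\partial x}(x,u)-u^\top\frac{\partial V}{\partial u}(x,u)\ge 0\quad\text{for all }x,u.$$ Consider the (nonlinear relaxation) system $$\nabla^2K(x)\,\dot x=-\frac{\partial V}{\partial x}(x,u),\qquad y=-\frac{\partial V}{\partial u}(x,u).$$ Then the system is passive with storage function $S(x):=K^*(\nabla K(x))$; that is, $S$ is bounded from below on $\mathcal{X}$ and $\nabla S(x)\dot x\le u^\top y$ for all $x\in\mathcal{X}$, $u\in\mathcal{U}$, where $\dot x=-(\nabla^2K(x))^{-1}\frac{\partial V}{\partial x}(x,u)$ and $y=-\frac{\partial V}{\partial u}(x,u)$.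
   Context: $K^*$ denotes the Legendre transform of $K$: with $\mathcal{Z}$ the image of the injective map $x\mapsto\nabla K(x)$, $K^*(z)=z^\top x-K(x)$ where $x$ solves $z=\nabla K(x)$ (equivalently $K^*(z)=\sup_x z^\top x-K(x)$ since $K$ is strictly convex). $\nabla$ denotes the gradient and $\nabla^2$ the Hessian. *)

(* Defs.v *)
From mathcomp Require Import all_boot all_order all_algebra.
From mathcomp Require Import all_classical all_reals all_analysis.
Set Implicit Arguments. Unset Strict Implicit. Unset Printing Implicit Defensive.
Import Order.TTheory GRing.Theory Num.Theory.
Import numFieldNormedType.Exports.
Local Open Scope classical_set_scope.
Local Open Scope ring_scope.

Section Defs.
Variable R : realType.

(* C^k on an open set A, via iterated directional derivatives: f is
   continuous at every point of A, and (for k+1) derivable at every point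
   of A in every direction, with every directional derivative C^k on A.
   (Existence and continuity of all directional derivatives up to order k
   on an open set of a finite-dimensional space is the usual C^k.) *)
Fixpoint Ck_on {V : normedModType R} (k : nat) (A : set V) (f : V -> R)
  : Prop :=
  match k with
  | 0 => forall x, A x -> {for x, continuous f}
  | k'.+1 => (forall x, A x -> {for x, continuous f}) /\
             (forall x v, A x -> derivable f x v) /\
             (forall v, Ck_on k' A ('D_v f))
  end.

Definition smooth_on {V : normedModType R} (A : set V) (f : V -> R) :=
  forall k, Ck_on k A f.

Definition evec {n : nat} (i : 'I_n) : 'rV[R]_n := delta_mx 0 i.

Definition grad {n : nat} (f : 'rV[R]_n -> R) (x : 'rV[R]_n) : 'rV[R]_n :=
  \row_i 'D_(evec i) f x.

Definition hessian {n : nat} (f : 'rV[R]_n -> R) (x : 'rV[R]_n) : 'M[R]_n :=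
  \matrix_(i, j) 'D_(evec i) ('D_(evec j) f) x.

Definition posdef {n : nat} (M : 'M[R]_n) :=
  forall v : 'rV[R]_n, v != 0 -> 0 < (v *m M *m v^T) 0 0.

Definition convex_sub {n : nat} (A : set 'rV[R]_n) :=
  forall x y (t : R), A x -> A y -> 0 <= t <= 1 -> A ((1 - t) *: x + t *: y).

(* Legendre transform of K (defined on A): K*(z) = z^T x - K(x) where x in A
   solves z = grad K x (x is unique when K is strictly convex). *)
Definition legendre {n : nat} (A : set 'rV[R]_n) (K : 'rV[R]_n -> R)
    (z : 'rV[R]_n) : R :=
  let x := xget 0 [set x | A x /\ grad K x = z] in (z *m x^T) 0 0 - K x.

Definition dVdx {n m : nat} (V : 'rV[R]_n * 'rV[R]_m -> R)
    (x : 'rV[R]_n) (u : 'rV[R]_m) : 'rV[R]_n :=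
  \row_i 'D_((evec i, 0)) V (x, u).

Definition dVdu {n m : nat} (V : 'rV[R]_n * 'rV[R]_m -> R)
    (x : 'rV[R]_n) (u : 'rV[R]_m) : 'rV[R]_m :=
  \row_i 'D_((0, evec i)) V (x, u).

End Defs.

(* Main.v *)
Require Import Defs.
From mathcomp Require Import all_boot all_order all_algebra.
From mathcomp Require Import all_classical all_reals all_analysis.
From mathcomp Require Import lra.
Import Order.TTheory GRing.Theory Num.Theory.
Import numFieldNormedType.Exports.
Local Open Scope classical_set_scope.
Local Open Scope ring_scope.


Section Gen.
Variable R : realType.
Variable V : normedModType R.

Lemma line_derE (f : V -> R) y w t :
  (derivable (fun s : R => f (s *: w + y)) t 1 <-> derivable f (t *: w + y) w) /\
  'D_1 (fun s : R => f (s *: w + y)) t = 'D_w f (t *: w + y).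
Proof.
have E : (fun h : R => h^-1 *: (((fun s : R => f (s *: w + y)) \o shift t) (h *: 1) - f (t *: w + y))) = (fun h => h^-1 *: ((f \o shift (t *: w + y)) (h *: w) - f (t *: w + y))).
  apply/funext => h /=. by rewrite [h *: 1]mulr1 scalerDl addrA.
by rewrite /derivable /derive /= E.
Qed.

Lemma line_der {f : V -> R} {y w t} :
  derivable f (t *: w + y) w ->
  derivable (fun s : R => f (s *: w + y)) t 1 /\
  'D_1 (fun s : R => f (s *: w + y)) t = 'D_w f (t *: w + y).
Proof.
move=> d; have [[_ H] E] := line_derE f y w t; split; [exact: H d | exact: E].
Qed.

Lemma deriveZdir (f : V -> R) y v a : derivable f y v ->
  'D_(a *: v) f y = a * 'D_v f y.
Proof.
move=> d.
have E0 : forall u : V, y = 0 *: u + y by move=> u; rewrite scale0r add0r.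
have [_ Ea] := line_derE f y (a *: v) 0.
have [[_ dg] Eg] := line_derE f y v 0.
rewrite -(E0 v) in dg Eg; rewrite -(E0 (a *: v)) in Ea.
have dg' := dg d.
rewrite -Ea -Eg.
have comp : (fun s : R => f (s *: (a *: v) + y)) = (fun s => f (s *: v + y)) \o (fun s => a * s).
  by apply/funext => s /=; rewrite scalerA mulrC.
have da : forall t, derivable (fun s : R => a * s) t 1.
  move=> t; have -> : (fun s : R => a * s) = ((cst a) * id)%R by apply/funext.
  by apply: derivableM; [exact: derivable_cst | exact: derivable_id].
have dg0 : derivable (fun s : R => f (s *: v + y)) (a * 0) 1 by rewrite mulr0.
rewrite comp -derive1E (derive1_comp (da 0) dg0).
rewrite mulr0 !derive1E mulrC; congr (_ * _).
by rewrite (deriveMl (f := id)) ?derive_id ?mulr1.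
Qed.

Lemma mvt0 (g : R -> R) h : (forall t, `|t| <= `|h| -> derivable g t 1) ->
  exists2 c, `|c| <= `|h| & g h - g 0 = h * 'D_1 g c.
Proof.
move=> dg.
have [h0|h0] := leP 0 h.
  have H1 : forall x, x \in `]0, h[ -> is_derive x 1 g ('D_1 g x).
    move=> x; rewrite in_itv /= => /andP[x0 xh]; apply/derivableP; apply: dg.
    by rewrite (ger0_norm (ltW x0)) (ger0_norm h0) ltW.
  have H2 : {within `[0, h], continuous g}.
    apply: derivable_within_continuous => x; rewrite in_itv /= => /andP[x0 xh].
    by apply: dg; rewrite !ger0_norm.
  have [c] := @MVT_segment R g ('D_1 g) 0 h h0 H1 H2.
  rewrite in_itv /= => /andP[c0 ch] ->.
  by exists c; rewrite ?ger0_norm // subr0 mulrC.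
have H1 : forall x, x \in `]h, 0[ -> is_derive x 1 g ('D_1 g x).
  move=> x; rewrite in_itv /= => /andP[x0 xh]; apply/derivableP; apply: dg.
  by rewrite (ltr0_norm xh) (ltr0_norm h0) lerN2 ltW.
have H2 : {within `[h, 0], continuous g}.
  apply: derivable_within_continuous => x; rewrite in_itv /= => /andP[x0 xh].
  by apply: dg; rewrite !ler0_norm ?lerN2 // ltW.
have [c] := @MVT_segment R g ('D_1 g) h 0 (ltW h0) H1 H2.
rewrite in_itv /= => /andP[hc c0] E.
exists c; first by rewrite !ler0_norm ?lerN2 // ltW.
have -> : g h - g 0 = - (g 0 - g h) by rewrite opprB.
by rewrite E sub0r mulrN opprK mulrC.
Qed.


Lemma ballE (a b : V) (s : R) : ball a s b = (`|a - b| < s).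
Proof. by rewrite -ball_normE. Qed.

Lemma open_ball {X : set V} {y} : open X -> X y ->
  exists2 r : R, 0 < r & forall z, `|y - z| < r -> X z.
Proof.
rewrite openE => oX Xy; have := oX y Xy.
move=> /nbhs_ballP [r r0 H]; exists r => // z yz; apply: H.
by rewrite ballE.
Qed.

Lemma deriveDdir (f : V -> R) (X : set V) y v w :
  open X -> X y -> (forall z u, X z -> derivable f z u) ->
  {for y, continuous ('D_w f)} ->
  'D_(v + w) f y = 'D_v f y + 'D_w f y.
Proof.
move=> oX Xy df cw.
have [r r0 rX] := open_ball oX Xy.
pose A := fun h : R => h^-1 *: (f (h *: w + (h *: v + y)) - f (h *: v + y)).
pose B := fun h : R => h^-1 *: (f (h *: v + y) - f y).
have cA : A @ 0^' --> 'D_w f y.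
  apply/cvgrPdist_lt => e e0.
  move: cw => /cvgrPdist_lt/(_ e e0)/nbhs_ballP [r' r'0 H'].
  pose M := `|v| + `|w| + 1.
  have M0 : 0 < M by rewrite /M ltr_wpDl // addr_ge0.
  have mr0 : 0 < Num.min r r' / M by rewrite divr_gt0 // lt_min r0.
  near=> h.
  have hn0 : h != 0 by near: h; exact: nbhs_dnbhs_neq.
  have hM : `|h| < Num.min r r' / M by near: h; exact: dnbhs0_lt.
  have key : forall t, `|t| <= `|h| -> `|y - (t *: w + (h *: v + y))| < r /\ `|y - (t *: w + (h *: v + y))| < r'.
    move=> t th; apply/andP; rewrite -lt_min.
    have -> : y - (t *: w + (h *: v + y)) = - (t *: w + h *: v).
      by rewrite addrA opprD addrCA subrr addr0.
    rewrite normrN; apply: (le_lt_trans (ler_normD _ _)).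
    rewrite !normrZ; apply: (@le_lt_trans _ _ (`|h| * M)).
      have H1 := ler_wpM2r (normr_ge0 w) th.
      have H2 := normr_ge0 h.
      rewrite /M !mulrDr mulr1; lra.
    by rewrite -ltr_pdivlMr.
  have [c ch E] := @mvt0 (fun s => f (s *: w + (h *: v + y))) h
    (fun t th => (line_der (df _ w (rX _ (key t th).1))).1).
  have -> : A h = 'D_w f (c *: w + (h *: v + y)).
    move: E => /=; rewrite scale0r add0r => E.
    rewrite /A /= E.
    rewrite (line_der (df _ w (rX _ (key c ch).1))).2.
    by rewrite /GRing.scale /= mulrA mulVf // mul1r.
  apply: H'; rewrite ballE.
  exact: (key c ch).2.
have cB : B @ 0^' --> 'D_v f y.
  exact: (df y v Xy).
have E : (fun h : R => h^-1 *: ((f \o shift y) (h *: (v + w)) - f y)) = A + B.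
  apply/funext => h; have -> : (A + B) h = A h + B h by [].
  rewrite /A /B /= -scalerDr addrA subrK.
  by rewrite [h *: (v + w)]scalerDr (addrC (h *: v)) addrA.
rewrite /derive E addrC.
apply: cvg_lim => //.
exact: cvgD cB cA.
Unshelve. all: by end_near.
Qed.

Lemma nb (a b x : V) {t s h : R} : `|t| <= `|h| -> `|s| <= `|h| ->
  `|x - (t *: a + (s *: b + x))| <= `|h| * (`|a| + `|b|).
Proof.
move=> th sh.
have -> : x - (t *: a + (s *: b + x)) = - (t *: a + s *: b).
  by rewrite addrA opprD addrCA subrr addr0.
rewrite normrN; apply: (le_trans (ler_normD _ _)).
rewrite !normrZ mulrDr lerD //.
  by rewrite ler_wpM2r.
by rewrite ler_wpM2r.
Qed.

Lemma second_diff (K : V -> R) (X : set V) x a b h r :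
  (forall z, `|x - z| < r -> X z) -> `|h| * (`|a| + `|b|) < r ->
  (forall z u, X z -> derivable K z u) ->
  (forall z u, X z -> derivable ('D_a K) z u) ->
  exists2 z, `|x - z| <= `|h| * (`|a| + `|b|) &
    K (h *: a + (h *: b + x)) - K (h *: a + x) - (K (h *: b + x) - K x)
      = h * (h * 'D_b ('D_a K) z).
Proof.
move=> rX hr Kd Kad.
have inX : forall t s, `|t| <= `|h| -> `|s| <= `|h| -> X (t *: a + (s *: b + x)).
  by move=> t s th sh; apply: rX; exact: le_lt_trans (nb a b x th sh) hr.
have h0 : `|0 : R| <= `|h| by rewrite normr0.
have E0 : forall (u y : V), 0 *: u + y = y by move=> u y; rewrite scale0r add0r.
pose g1 := fun s : R => K (s *: a + (h *: b + x)).
pose g2 := fun s : R => K (s *: a + x).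
pose phi := fun s : R => K (s *: a + (h *: b + x)) - K (s *: a + x).
have dphi : forall t, `|t| <= `|h| -> derivable phi t 1 /\
    'D_1 phi t = 'D_a K (t *: a + (h *: b + x)) - 'D_a K (t *: a + x).
  move=> t th.
  have X1 := inX t h th (lexx _).
  have X2 : X (t *: a + x) by have := inX t 0 th h0; rewrite E0.
  have [d1 e1] := line_der (Kd _ a X1).
  have [d2 e2] := line_der (Kd _ a X2).
  have -> : phi = (g1 - g2)%R by apply/funext.
  split; first exact: derivableB d1 d2.
  by rewrite (deriveB d1 d2) e1 e2.
have [c ch Ec] := @mvt0 phi h (fun t th => (dphi t th).1).
rewrite (dphi c ch).2 in Ec.
pose psi := fun s : R => 'D_a K (s *: b + (c *: a + x)).
have dpsi : forall t, `|t| <= `|h| -> derivable psi t 1 /\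
    'D_1 psi t = 'D_b ('D_a K) (t *: b + (c *: a + x)).
  move=> t th.
  have X3 : X (t *: b + (c *: a + x)) by rewrite addrCA; exact: inX.
  exact: line_der (Kad _ b X3).
have [d dh Ed] := @mvt0 psi h (fun t th => (dpsi t th).1).
rewrite (dpsi d dh).2 /psi E0 in Ed.
exists (d *: b + (c *: a + x)).
  by rewrite addrCA; exact: nb.
rewrite -Ed (addrCA (h *: b)) -Ec /phi !E0.
lra.
Qed.

Lemma eq_small (p q : R) : (forall e, 0 < e -> `|p - q| < e) -> p = q.
Proof.
move=> H; apply/eqP; rewrite -subr_eq0 -normr_le0 leNgt; apply/negP => pq.
by have := H _ pq; rewrite ltxx.
Qed.

Lemma schwarz (K : V -> R) (X : set V) x a b : open X -> X x ->
  (forall z u, X z -> derivable K z u) ->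
  (forall u z w, X z -> derivable ('D_u K) z w) ->
  (forall u w, {for x, continuous ('D_w ('D_u K))}) ->
  'D_b ('D_a K) x = 'D_a ('D_b K) x.
Proof.
move=> oX Xx Kd Kd2 Kc.
have [r r0 rX] := open_ball oX Xx.
apply: eq_small => e e0.
have e2 : 0 < e / 2 by rewrite divr_gt0.
move: (Kc a b) => /cvgrPdist_lt/(_ _ e2)/nbhs_ballP [r1 r10 H1].
move: (Kc b a) => /cvgrPdist_lt/(_ _ e2)/nbhs_ballP [r2 r20 H2].
pose M := `|a| + `|b| + 1.
have M0 : 0 < M by rewrite /M ltr_wpDl // addr_ge0.
pose dl := Num.min r (Num.min r1 r2).
have dl0 : 0 < dl by rewrite /dl !lt_min r0 r10 r20.
pose h := dl / 2 / M.
have hpos : 0 < h by rewrite /h !divr_gt0.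
have hn0 : h != 0 by rewrite gt_eqF.
have hM : `|h| * (`|a| + `|b|) < dl.
  rewrite gtr0_norm //; apply: (@le_lt_trans _ _ (h * M)).
    by rewrite ler_wpM2l ?ltW // /M ltrDl ltr01.
  rewrite /h divfK; [lra | by rewrite gt_eqF].
have : `|h| * (`|a| + `|b|) < r /\ `|h| * (`|a| + `|b|) < r1 /\ `|h| * (`|a| + `|b|) < r2.
  by move: hM; rewrite /dl !lt_min => /andP[-> /andP[-> ->]].
move=> [hr [hr1 hr2]].
have [z1 z1b E1] := @second_diff K X x a b h r rX hr Kd (Kd2 a).
have hr' : `|h| * (`|b| + `|a|) < r by rewrite addrC.
have [z2 z2b E2] := @second_diff K X x b a h r rX hr' Kd (Kd2 b).
have E : 'D_b ('D_a K) z1 = 'D_a ('D_b K) z2.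
  apply: (mulfI hn0); apply: (mulfI hn0); rewrite -E1 -E2 (addrCA (h *: b)).
  lra.
have A1 : `|'D_b ('D_a K) x - 'D_b ('D_a K) z1| < e / 2.
  by apply: H1; rewrite ballE; exact: le_lt_trans z1b hr1.
have A2 : `|'D_a ('D_b K) x - 'D_a ('D_b K) z2| < e / 2.
  apply: H2; rewrite ballE; apply: (le_lt_trans z2b); by rewrite addrC.
rewrite E in A1.
have -> : 'D_b ('D_a K) x - 'D_a ('D_b K) x =
  ('D_b ('D_a K) x - 'D_a ('D_b K) z2) - ('D_a ('D_b K) x - 'D_a ('D_b K) z2).
  by rewrite opprB addrA subrK.
apply: (le_lt_trans (ler_normB _ _)).
rewrite [X in _ < X](splitr e); exact: ltrD A1 A2.
Qed.

End Gen.
Arguments line_der {R V f y w t}.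


Section RV.
Variable R : realType.
Variable n : nat.
Local Notation VV := 'rV[R]_n.
Local Notation ev i := (@evec R n i).

Lemma derive_lin (f : VV -> R) (X : set VV) y v : open X -> X y ->
  (forall z u, X z -> derivable f z u) ->
  (forall u, {for y, continuous ('D_u f)}) ->
  'D_v f y = \sum_i v 0 i * 'D_(ev i) f y.
Proof.
move=> oX Xy df dc.
rewrite {1}(row_sum_delta v).
apply: (big_rec2 (fun a b => 'D_a f y = b)); first exact: derive0.
move=> i a b _ <-.
by rewrite (@deriveDdir R _ f X y _ _ oX Xy df (dc a)) (@deriveZdir R _ f y) //; exact: df.
Qed.

Lemma derive_coord (j : 'I_n) (z v : VV) :
  derivable (fun z : VV => z 0 j) z v /\ 'D_v (fun z : VV => z 0 j) z = v 0 j.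
Proof.
have H : \forall h \near (0:R)^', h^-1 *: (((fun z : VV => z 0 j) \o shift z) (h *: v) - z 0 j) = v 0 j.
  near=> h.
  have hn0 : h != 0 by near: h; exact: nbhs_dnbhs_neq.
  by rewrite /= !mxE addrK /GRing.scale /= mulrA mulVf // mul1r.
split; first exact: (is_cvg_near_cst (v 0 j) H).
rewrite /derive; apply: lim_near_cst => //.
Unshelve. all: by end_near.
Qed.

Lemma near_open (X : set VV) z : open X -> X z -> \forall z' \near z, X z'.
Proof. by rewrite openE => oX Xz; exact: oX. Qed.

Lemma quad (K : VV -> R) (X : set VV) z d : open X -> X z ->
  (forall z u, X z -> derivable K z u) ->
  (forall u z, X z -> {for z, continuous ('D_u K)}) ->
  (forall u z w, X z -> derivable ('D_u K) z w) ->
  (forall u w z, X z -> {for z, continuous ('D_w ('D_u K))}) ->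
  'D_d ('D_d K) z = (d *m hessian K z *m d^T) 0 0.
Proof.
move=> oX Xz Kd Kc1 Kd2 Kc2.
rewrite (@derive_lin ('D_d K) X z d oX Xz (Kd2 d) (fun u => Kc2 d u z Xz)).
have E : forall i, 'D_(ev i) ('D_d K) z =
    \sum_j d 0 j * 'D_(ev i) ('D_(ev j) K) z.
  move=> i.
  rewrite (@near_eq_derive _ _ _ _ (\sum_(j < n) (fun z' => d 0 j * 'D_(ev j) K z'))).
    rewrite derive_sum; last by move=> j; apply: derivableM => //; exact: Kd2.
    apply: eq_bigr => j _.
    by rewrite (deriveMl (f := 'D_(ev j) K)) //; exact: Kd2.
  have := @near_open X z oX Xz; apply: filter_app; near=> z' => Xz'.
  rewrite fct_sumE.
  exact: (@derive_lin K X z' d oX Xz' Kd (fun u => Kc1 u z' Xz')).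
under eq_bigr do rewrite E.
rewrite [RHS]mxE [RHS](eq_bigr (fun j => \sum_i d 0 i * hessian K z i j * d 0 j)); last first.
  by move=> j _; rewrite !mxE big_distrl.
rewrite exchange_big /=; apply: eq_bigr => i _; rewrite big_distrr /=.
by apply: eq_bigr => j _; rewrite !mxE mulrCA mulrC.
Unshelve. all: by end_near.
Qed.

Definition C2 (X : set VV) (K : VV -> R) :=
  [/\ open X, (forall z u, X z -> derivable K z u),
   (forall u z, X z -> {for z, continuous ('D_u K)}),
   (forall u z w, X z -> derivable ('D_u K) z w) &
   (forall u w z, X z -> {for z, continuous ('D_w ('D_u K))})].

Lemma hess_sym X K x : C2 X K -> X x -> (hessian K x)^T = hessian K x.
Proof.
move=> [oX Kd Kc1 Kd2 Kc2] Xx; apply/matrixP => i j; rewrite !mxE.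
exact: (@schwarz R _ K X x (ev i) (ev j) oX Xx Kd Kd2 (fun u w => Kc2 u w x Xx)).
Qed.

Lemma seg {X K x d} : C2 X K -> (forall t : R, 0 <= t <= 1 -> X (t *: d + x)) ->
  forall t : R, 0 <= t <= 1 ->
  derivable (fun s : R => 'D_d K (s *: d + x)) t 1 /\
  'D_1 (fun s : R => 'D_d K (s *: d + x)) t = (d *m hessian K (t *: d + x) *m d^T) 0 0.
Proof.
move=> hK Xs t t01; have [oX Kd Kc1 Kd2 Kc2] := hK.
have [d1 e1] := line_der (Kd2 d _ d (Xs t t01)).
split => //; rewrite e1.
exact: (@quad K X _ d oX (Xs t t01) Kd Kc1 Kd2 Kc2).
Qed.

Lemma seg_cont {X K x d} : C2 X K -> (forall t : R, 0 <= t <= 1 -> X (t *: d + x)) ->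
  {within `[0, 1], continuous (fun s : R => 'D_d K (s *: d + x))}.
Proof.
move=> hK Xs; apply: derivable_within_continuous => t.
rewrite in_itv /= => t01; exact: (seg hK Xs t t01).1.
Qed.

Lemma convex_line {X : set VV} {x y : VV} {t : R} : convex_sub X -> X x -> X y -> 0 <= t <= 1 ->
  X (t *: (y - x) + x).
Proof.
move=> cX Xx Xy t01; have := cX x y t Xx Xy t01.
congr X; rewrite scalerBl scale1r scalerBr.
by rewrite addrC addrA addrAC.
Qed.

Lemma grad_dir {X K x} d : C2 X K -> X x ->
  'D_d K x = (grad K x *m d^T) 0 0.
Proof.
move=> [oX Kd Kc1 Kd2 Kc2] Xx.
rewrite (@derive_lin K X x d oX Xx Kd (fun u => Kc1 u x Xx)) mxE.
by apply: eq_bigr => i _; rewrite !mxE mulrC.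
Qed.

Lemma grad_inj X K x y : C2 X K -> convex_sub X ->
  (forall z, X z -> posdef (hessian K z)) ->
  X x -> X y -> grad K x = grad K y -> x = y.
Proof.
move=> hK cX pd Xx Xy gxy.
apply/eqP; apply/negPn/negP => xy.
pose d := y - x.
have dn0 : d != 0 by rewrite /d subr_eq0 eq_sym.
have Xs : forall t : R, 0 <= t <= 1 -> X (t *: d + x) by move=> t; exact: convex_line.
pose psi := fun s : R => 'D_d K (s *: d + x).
have H1 : forall t : R, t \in `]0, 1[ -> derivable psi t 1.
  move=> t; rewrite in_itv /= => /andP[t0 t1].
  have t01 : 0 <= t <= 1 by rewrite !ltW.
  by have [] := seg hK Xs t t01.
have H2 : forall t : R, t \in `]0, 1[ -> 0 < derive1 psi t.
  move=> t; rewrite in_itv /= => /andP[t0 t1].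
  have t01 : 0 <= t <= 1 by rewrite !ltW.
  rewrite derive1E (seg hK Xs t t01).2.
  exact: (pd _ (Xs t t01) d dn0).
have := @gtr0_derive1_lt_cc R psi 0 1 H1 H2 (seg_cont hK Xs) 0 1.
rewrite !in_itv /= !lexx ler01 /= => /(_ isT) /(_ isT) /(_ ltr01).
rewrite /psi scale0r add0r scale1r /d subrK.
rewrite (grad_dir d hK Xx) (grad_dir d hK Xy) gxy.
by rewrite ltxx.
Qed.

Lemma low_bound X K x : C2 X K -> convex_sub X ->
  (forall z, X z -> posdef (hessian K z)) ->
  X 0 -> X x -> K x - K 0 <= 'D_x K x.
Proof.
move=> hK cX pd X0 Xx; have [oX Kd Kc1 Kd2 Kc2] := hK.
have Xs : forall t : R, 0 <= t <= 1 -> X (t *: x + 0).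
  by move=> t t01; have := convex_line cX X0 Xx t01; rewrite subr0.
pose phi := fun s : R => K (s *: x + 0).
have Dphi : forall t : R, 0 <= t <= 1 -> is_derive t 1 phi ('D_x K (t *: x + 0)).
  move=> t t01; have [d1 e1] := line_der (Kd _ x (Xs t t01)).
  by rewrite -e1; exact: derivableP.
have H1 : forall t : R, t \in `]0, 1[ -> is_derive t 1 phi ('D_x K (t *: x + 0)).
  by move=> t; rewrite in_itv /= => /andP[t0 t1]; apply: Dphi; rewrite !ltW.
have H2 : {within `[0, 1], continuous phi}.
  apply: derivable_within_continuous => t; rewrite in_itv /= => t01.
  by have [] := Dphi t t01.
have [c] := @MVT_segment R phi (fun t => 'D_x K (t *: x + 0)) 0 1 ler01 H1 H2.
rewrite in_itv /= => c01.
rewrite /phi scale0r scale1r !addr0 subr0 mulr1 => ->.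
pose psi := fun s : R => 'D_x K (s *: x + 0).
have G1 : forall t : R, t \in `]0, 1[ -> derivable psi t 1.
  move=> t; rewrite in_itv /= => /andP[t0 t1].
  have t01 : 0 <= t <= 1 by rewrite !ltW.
  by have [] := seg hK Xs t t01.
have G2 : forall t : R, t \in `]0, 1[ -> 0 <= derive1 psi t.
  move=> t; rewrite in_itv /= => /andP[t0 t1].
  have t01 : 0 <= t <= 1 by rewrite !ltW.
  rewrite derive1E (seg hK Xs t t01).2.
  have [->|xn0] := eqVneq x 0; first by rewrite mul0mx mul0mx mxE.
  exact: ltW (pd _ (Xs t t01) x xn0).
have := @ger0_derive1_le_cc R psi 0 1 G1 G2 (seg_cont hK Xs) c 1.
rewrite !in_itv /= !lexx ler01 c01 /= => /(_ isT) /(_ isT).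
case/andP: c01 => _ c1 => /(_ c1).
by rewrite /psi scale1r !addr0.
Qed.

Definition Tf (K : VV -> R) (z : VV) : R := (grad K z *m z^T) 0 0 - K z.

Lemma legendreE X K x : C2 X K -> convex_sub X ->
  (forall z, X z -> posdef (hessian K z)) -> X x ->
  legendre X K (grad K x) = Tf K x.
Proof.
move=> hK cX pd Xx; rewrite /legendre /=.
have -> : xget 0 [set x' | X x' /\ grad K x' = grad K x] = x.
  apply: xget_unique; first by split.
  by move=> y [Xy gy]; exact: (@grad_inj X K y x hK cX pd Xy Xx gy).
by [].
Qed.

Lemma sum_delta (F : 'I_n -> R) i : \sum_j F j * (ev i) 0 j = F i.
Proof.
rewrite (bigD1 i) //= /evec mxE !eqxx /= mulr1 big1 ?addr0 // => j ji.
by rewrite mxE (negbTE ji) andbF mulr0.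
Qed.

Lemma TfE K : Tf K = ((\sum_(j < n) (fun z : VV => 'D_(ev j) K z * z 0 j)) - K)%R.
Proof.
apply/funext => z; rewrite /Tf mxE fct_sumE.
by congr (_ - _); apply: eq_bigr => j _; rewrite !mxE.
Qed.

Lemma Tf_der X K x v : C2 X K -> X x -> derivable (Tf K) x v.
Proof.
move=> [oX Kd Kc1 Kd2 Kc2] Xx; rewrite TfE.
apply: derivableB; last exact: Kd.
apply: derivable_sum => j; apply: derivableM; first exact: Kd2.
exact: (derive_coord j x v).1.
Qed.

Lemma Tf_grad X K x i : C2 X K -> X x ->
  'D_(ev i) (Tf K) x = \sum_j x 0 j * 'D_(ev i) ('D_(ev j) K) x.
Proof.
move=> [oX Kd Kc1 Kd2 Kc2] Xx; rewrite TfE.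
rewrite deriveB; last exact: Kd.
  rewrite derive_sum; last first.
    move=> j; apply: derivableM; first exact: Kd2.
    exact: (derive_coord j x _).1.
  under eq_bigr => j _.
    rewrite deriveM; last exact: (derive_coord j x _).1.
      rewrite (derive_coord j x _).2.
      over.
    exact: Kd2.
  rewrite big_split /= sum_delta.
  by rewrite addrAC subrr add0r; apply: eq_bigr => j _; rewrite /GRing.scale /=.
apply: derivable_sum => j; apply: derivableM; first exact: Kd2.
exact: (derive_coord j x _).1.
Qed.

Lemma hess_unit (X : set VV) (K : VV -> R) x : (forall z, X z -> posdef (hessian K z)) -> X x ->
  hessian K x \in unitmx.
Proof.
move=> pd Xx; rewrite unitmxE unitfE; apply/negP => /det0P [v vn0 vH].
by have := pd x Xx v vn0; rewrite vH mul0mx mxE ltxx.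
Qed.

End RV.
Arguments C2 {R n}.
Arguments legendreE {R n X K x}.
Arguments low_bound {R n X K x}.
Arguments grad_dir {R n X K x} d.
Arguments near_open {R n X z}.
Arguments Tf {R n}.
Arguments Tf_der {R n X K x v}.
Arguments Tf_grad {R n X K x i}.
Arguments hess_sym {R n X K x}.
Arguments hess_unit {R n X K x}.


Theorem mainTheorem4 (R : realType) (n m : nat)
  (X : set 'rV[R]_n) (K : 'rV[R]_n -> R)
  (V : 'rV[R]_n * 'rV[R]_m -> R) :
  open X -> connected X -> convex_sub X -> X 0 ->
  smooth_on X K ->
  (forall x, X x -> posdef (hessian K x)) ->
  smooth_on (X `*` setT) V ->
  (forall x u, X x ->
     0 <= (x *m (dVdx V x u)^T) 0 0 - (u *m (dVdu V x u)^T) 0 0) ->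
  let S := fun x => legendre X K (grad K x) in
  (exists c : R, forall x, X x -> c <= S x) /\
  (forall x (u : 'rV[R]_m), X x ->
     let xdot := - (dVdx V x u *m (invmx (hessian K x))^T) in
     let y := - dVdu V x u in
     (forall v, derivable S x v) /\
     (grad S x *m xdot^T) 0 0 <= (u *m y^T) 0 0).
Proof.
move=> oX cnX cvX X0 sK pd sV hV S.
have hK : C2 X K.
  have [_ [Kd K2]] := sK 2%N.
  split => //.
  - by move=> u z Xz; have [c1 _] := K2 u; exact: c1.
  - by move=> u z w Xz; have [_ [d1 _]] := K2 u; exact: d1.
  - by move=> u w z Xz; have [_ [_ c2]] := K2 u; exact: c2.
have SE : forall x, X x -> S x = Tf K x.
  by move=> x Xx; rewrite /S (legendreE hK cvX pd Xx).
split.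
  exists (- K 0) => x Xx; rewrite SE // /Tf.
  have := low_bound hK cvX pd X0 Xx.
  rewrite (grad_dir x hK Xx) => H; lra.
move=> x u Xx xdot y.
have nS : \forall z \near x, Tf K z = S z.
  have := near_open oX Xx; apply: filter_app; near=> z => Xz.
  by rewrite SE.
split.
  move=> v; apply: (near_eq_derivable nS); exact: (Tf_der hK Xx).
have gS : grad S x = x *m hessian K x.
  rewrite -(hess_sym hK Xx).
  apply/rowP => i; rewrite !mxE -(@near_eq_derive _ _ _ (Tf K) S x _ nS) (Tf_grad hK Xx).
  by apply: eq_bigr => j _; rewrite !mxE.
rewrite gS /xdot /y.
rewrite !linearN /= trmx_mul trmxK -!mulmxA (mulmxA (hessian K x)).
rewrite mulmxV ?mul1mx; last exact: (hess_unit pd Xx).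
rewrite [X in X <= _]mxE [X in _ <= X]mxE lerN2.
by have := hV x u Xx; rewrite subr_ge0.
Unshelve. all: by end_near.
Qed.
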